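(* Let $w\ge1$ and let $m_1,\dots,m_w$ and $l_1,\dots,l_w$ be positive integers with $m_i\ge 3$ for all $i$ and $l_i\le 3$ for all $i\ge 2$. For an integer $k\ge0$ put \[ L(m,l)=\sum_{\substack{k_1,\dots,k_w\ge0\\ k_1+\dots+k_w=k}}\ \prod_{i=1}^w (k_i+m_i)^{l_i-\frac72}. \] Then for every $\delta>0$ there is a constant $C_\delta$ (depending only on $\delta$) such that for all such data, \[ L(m,l)\le C_\delta^{\sum_i m_i}\,(1+\delta)^k\,(k+m_1)^{l_1-\frac72}. \] *)

(* Defs.v *)
From Stdlib Require Import Reals.
Open Scope R_scope.

(* Indices i = 1..w of the paper are shifted to i = 0..w-1 here. *)

Definition term (m l : nat -> nat) (i ki : nat) : R :=
  Rpower (INR (ki + m i)) (INR (l i) - 7/2).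

(* compsum w f k = sum over (k_0,...,k_{w-1}) in N^w with k_0+...+k_{w-1} = k
   of prod_{i<w} f i k_i.  Defined by recursion on w, splitting off the last
   coordinate k_{w} = j (0 <= j <= k). *)
Fixpoint compsum (w : nat) (f : nat -> nat -> R) (k : nat) : R :=
  match w with
  | O => if Nat.eqb k 0 then 1 else 0
  | S w' => sum_f_R0 (fun j => f w' j * compsum w' f (k - j)%nat) k
  end.

Definition Lsum (w : nat) (m l : nat -> nat) (k : nat) : R :=
  compsum w (term m l) k.

Fixpoint natsum (w : nat) (m : nat -> nat) : nat :=
  match w with
  | O => O
  | S w' => (natsum w' m + m w')%nat
  end.

(* Main.v *)
Require Import Defs.
From Stdlib Require Import Reals Lra Lia.
Open Scope R_scope.

Lemma ln_le' : forall x y, 0 < x -> x <= y -> ln x <= ln y.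
Proof.
  intros x y Hx Hxy. destruct (Rle_lt_or_eq_dec x y Hxy) as [H|H].
  - left. now apply ln_increasing.
  - subst; lra.
Qed.

Lemma exp_le' : forall x y, x <= y -> exp x <= exp y.
Proof.
  intros x y Hxy. destruct (Rle_lt_or_eq_dec x y Hxy) as [H|H].
  - left. now apply exp_increasing.
  - subst; lra.
Qed.

Lemma term_pos : forall m l i j, (1 <= m i)%nat -> 0 < term m l i j.
Proof. intros. unfold term, Rpower. apply exp_pos. Qed.

Lemma term_nonneg : forall m l i j, 0 <= term m l i j.
Proof. intros. unfold term, Rpower. left; apply exp_pos. Qed.

Lemma compsum_nonneg : forall w f k, (forall i j, 0 <= f i j) -> 0 <= compsum w f k.
Proof.
  induction w; intros f k Hf; simpl.
  - destruct (Nat.eqb k 0); lra.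
  - apply cond_pos_sum. intros j. apply Rmult_le_pos; auto.
Qed.

Lemma compsum0_pos : forall f n, (0 < n)%nat -> compsum 0 f n = 0.
Proof. intros f [|n] H; [lia|reflexivity]. Qed.

Lemma compsum1 : forall f k, compsum 1 f k = f 0%nat k.
Proof.
  intros f [|k].
  - simpl. ring.
  - change (compsum 1 f (S k)) with (sum_f_R0 (fun j => f 0%nat j * compsum 0 f (S k - j)) (S k)).
    rewrite tech5. rewrite Nat.sub_diag. simpl (compsum 0 f 0).
    assert (H : forall N, (N <= k)%nat -> sum_f_R0 (fun j => f 0%nat j * compsum 0 f (S k - j)) N = 0).
    { induction N; intros HN.
      - cbn [sum_f_R0]. rewrite compsum0_pos by lia. ring.
      - rewrite tech5, IHN by lia. rewrite compsum0_pos by lia. ring. }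
    rewrite H by lia. ring.
Qed.

Lemma term_le1 : forall m l i j, (3 <= m i)%nat -> (l i <= 3)%nat -> term m l i j <= 1.
Proof.
  intros m l i j Hm Hl. unfold term, Rpower. rewrite <- exp_0. apply exp_le'.
  assert (H1 : 1 <= INR (j + m i)) by (apply (le_INR 1); lia).
  assert (H2 : 0 <= ln (INR (j + m i))) by (rewrite <- ln_1; apply ln_le'; lra).
  assert (H3 : INR (l i) <= 3) by (apply (le_INR _ 3) in Hl; simpl in Hl; lra).
  nra.
Qed.

Lemma bern : forall e n, 0 <= e -> 1 + INR n * e <= (1 + e) ^ n.
Proof.
  intros e n He. induction n.
  - simpl; lra.
  - rewrite S_INR. simpl. assert (0 <= INR n) by apply pos_INR. nra.
Qed.

Lemma ratio_bound : forall m l k j, (j <= k)%nat -> (1 <= m 0%nat)%nat -> (1 <= l 0%nat)%nat ->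
  term m l 0 (k - j) <= term m l 0 k * (1 + INR j) ^ 3.
Proof.
  intros m l k j Hjk Hm Hl. unfold term.
  set (X := INR (k + m 0%nat)). set (Y := INR (k - j + m 0%nat)).
  set (a := INR (l 0%nat) - 7/2).
  assert (HY : 1 <= Y) by (unfold Y; apply (le_INR 1); lia).
  assert (HXY : Y <= X) by (unfold X, Y; apply le_INR; lia).
  assert (Hj : 0 <= INR j) by apply pos_INR.
  assert (HX2 : X <= Y * (1 + INR j)).
  { unfold X, Y. replace (k + m 0%nat)%nat with ((k - j + m 0%nat) + j)%nat by lia.
    rewrite plus_INR. fold Y. nra. }
  assert (Ha : -5/2 <= a) by (unfold a; apply (le_INR 1) in Hl; simpl in Hl; lra).
  rewrite <- Rpower_pow by lra. unfold Rpower. rewrite <- exp_plus. apply exp_le'.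
  assert (L1 : ln Y <= ln X) by (apply ln_le'; lra).
  assert (L2 : ln X <= ln Y + ln (1 + INR j)).
  { rewrite <- ln_mult by lra. apply ln_le'; lra. }
  assert (L3 : 0 <= ln (1 + INR j)) by (rewrite <- ln_1; apply ln_le'; lra).
  simpl INR. nra.
Qed.

Lemma geom_le : forall x N, 0 <= x < 1 -> sum_f_R0 (fun i => x ^ i) N <= / (1 - x).
Proof.
  intros x N Hx. rewrite tech3 by lra. unfold Rdiv.
  rewrite <- (Rmult_1_l (/ (1 - x))) at 2.
  apply Rmult_le_compat_r. left; apply Rinv_0_lt_compat; lra.
  assert (0 <= x ^ S N) by (apply pow_le; lra). lra.
Qed.

Lemma main_ind : forall q r B D (m l : nat -> nat) w,
  1 <= q -> 0 < r < q -> 0 <= B ->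
  (forall j, (1 + INR j) ^ 3 <= B * r ^ j) ->
  B * / (1 - r / q) <= D -> 1 <= D ->
  (forall i, (i < w)%nat -> (3 <= m i)%nat) ->
  (forall i, (i < w)%nat -> (1 <= l i)%nat) ->
  (forall i, (1 <= i < w)%nat -> (l i <= 3)%nat) ->
  forall n, (n < w)%nat -> forall k,
    compsum (S n) (term m l) k <= D ^ n * q ^ k * term m l 0 k.
Proof.
  intros q r B D m l w Hq Hr HB Hpoly HD HD1 Hm Hl Hl3.
  induction n; intros Hn k.
  - rewrite compsum1. simpl.
    assert (1 <= q ^ k) by (apply pow_R1_Rle; lra).
    assert (0 <= term m l 0 k) by apply term_nonneg. nra.
  - set (x := r / q).
    assert (Hxq : x * q = r) by (unfold x; field; lra).
    assert (Hx : 0 <= x < 1) by (split; nra).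
    set (t0 := term m l 0 k).
    assert (Ht0 : 0 <= t0) by apply term_nonneg.
    assert (HDn : 0 <= D ^ n) by (apply pow_le; lra).
    assert (Hqk : 0 <= q ^ k) by (apply pow_le; lra).
    set (c := D ^ n * q ^ k * t0 * B).
    change (compsum (S (S n)) (term m l) k) with
      (sum_f_R0 (fun j => term m l (S n) j * compsum (S n) (term m l) (k - j)) k).
    apply Rle_trans with (sum_f_R0 (fun j => x ^ j * c) k).
    + apply sum_Rle. intros j Hj.
      assert (Hf0 := term_nonneg m l (S n) j).
      assert (Hf1 : term m l (S n) j <= 1) by (apply term_le1; [apply Hm; lia | apply Hl3; lia]).
      assert (Hc0 : 0 <= compsum (S n) (term m l) (k - j)) by (apply compsum_nonneg; apply term_nonneg).
      assert (Hc1 := IHn ltac:(lia) (k - j)%nat).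
      assert (Hr0 : term m l 0 (k - j) <= t0 * (1 + INR j) ^ 3)
        by (apply ratio_bound; [lia | specialize (Hm 0%nat ltac:(lia)); lia | apply Hl; lia]).
      assert (Hp := Hpoly j).
      assert (Hqkj : 0 <= q ^ (k - j)) by (apply pow_le; lra).
      assert (Hrj : 0 <= r ^ j) by (apply pow_le; lra).
      assert (Heq : q ^ (k - j) * r ^ j = q ^ k * x ^ j).
      { rewrite <- Hxq, Rpow_mult_distr.
        replace k with ((k - j) + j)%nat at 2 by lia. rewrite pow_add. ring. }
      apply Rle_trans with (1 * (D ^ n * q ^ (k - j) * term m l 0 (k - j))).
      { apply Rmult_le_compat; auto. }
      apply Rle_trans with (D ^ n * q ^ (k - j) * (t0 * (B * r ^ j))).
      { rewrite Rmult_1_l. apply Rmult_le_compat_l. nra.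
        apply Rle_trans with (t0 * (1 + INR j) ^ 3); auto. apply Rmult_le_compat_l; auto. }
      unfold c. replace (D ^ n * q ^ (k - j) * (t0 * (B * r ^ j))) with
        (D ^ n * t0 * B * (q ^ (k - j) * r ^ j)) by ring.
      rewrite Heq. right; ring.
    + rewrite <- scal_sum.
      assert (Hc : 0 <= c) by (unfold c; repeat apply Rmult_le_pos; auto).
      apply Rle_trans with (c * / (1 - x)).
      { apply Rmult_le_compat_l; auto. apply geom_le; auto. }
      unfold c. simpl (D ^ S n).
      replace (D ^ n * q ^ k * t0 * B * / (1 - x)) with (D ^ n * q ^ k * t0 * (B * / (1 - x))) by ring.
      replace (D * D ^ n * q ^ k * t0) with (D ^ n * q ^ k * t0 * D) by ring.
      apply Rmult_le_compat_l. repeat apply Rmult_le_pos; auto. auto.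
Qed.

Lemma natsum_ge : forall (m : nat -> nat) n, (forall i, (i < n)%nat -> (1 <= m i)%nat) -> (n <= natsum n m)%nat.
Proof.
  intros m n; induction n; intros H; simpl. lia.
  assert (n <= natsum n m)%nat by (apply IHn; intros; apply H; lia).
  specialize (H n ltac:(lia)). lia.
Qed.

Theorem proposition4p18 :
  forall delta : R, 0 < delta ->
  exists C : R,
    forall (w : nat) (m l : nat -> nat) (k : nat),
      (1 <= w)%nat ->
      (forall i, (i < w)%nat -> (3 <= m i)%nat) ->
      (forall i, (i < w)%nat -> (1 <= l i)%nat) ->
      (forall i, (1 <= i < w)%nat -> (l i <= 3)%nat) ->
      Lsum w m l k <=
        C ^ (natsum w m) * (1 + delta) ^ k
        * Rpower (INR (k + m 0%nat)) (INR (l 0%nat) - 7/2).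
Proof.
  intros delta Hd.
  set (e := Rmin delta 1 / 8).
  assert (He : 0 < e /\ e <= 1/8 /\ 8 * e <= delta).
  { unfold e. assert (Rmin delta 1 <= delta) by apply Rmin_l. assert (Rmin delta 1 <= 1) by apply Rmin_r.
    assert (0 < Rmin delta 1) by (apply Rmin_glb_lt; lra). lra. }
  set (r := (1 + e) ^ 3).
  set (B := / e ^ 3).
  set (q := 1 + delta).
  set (D := Rmax 1 (B * / (1 - r / q))).
  exists D. intros w m l k Hw Hm Hl Hl3.
  assert (Hr : 0 < r < q) by (unfold r, q; simpl; nra).
  assert (He3 : 0 < e ^ 3) by (apply pow_lt; lra).
  assert (HB : 0 <= B) by (unfold B; left; apply Rinv_0_lt_compat; auto).
  assert (Hpoly : forall j, (1 + INR j) ^ 3 <= B * r ^ j).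
  { intros j. assert (Hj := pos_INR j).
    assert (H1 : (1 + INR j) * e <= (1 + e) ^ j).
    { apply Rle_trans with (1 + INR j * e). nra. apply bern; lra. }
    assert (H2 : ((1 + INR j) * e) ^ 3 <= r ^ j).
    { unfold r. rewrite <- pow_mult, Nat.mul_comm, pow_mult.
      apply pow_incr. split; [nra | auto]. }
    rewrite Rpow_mult_distr in H2.
    replace ((1 + INR j) ^ 3) with ((1 + INR j) ^ 3 * e ^ 3 * B) by (unfold B; field; lra).
    rewrite (Rmult_comm B). apply Rmult_le_compat_r; auto. }
  assert (HD : B * / (1 - r / q) <= D) by apply Rmax_r.
  assert (HD1 : 1 <= D) by apply Rmax_l.
  destruct w as [|n]; [lia|].
  unfold Lsum.
  apply Rle_trans with (D ^ n * q ^ k * term m l 0 k).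
  - apply (main_ind q r B D m l (S n)); auto; unfold q; lra.
  - unfold term. fold q.
    assert (0 <= q ^ k) by (apply pow_le; unfold q; lra).
    assert (0 <= Rpower (INR (k + m 0%nat)) (INR (l 0%nat) - 7/2)) by (unfold Rpower; left; apply exp_pos).
    apply Rmult_le_compat_r; auto. apply Rmult_le_compat_r; auto.
    apply Rle_pow; auto.
    assert (n <= natsum n m)%nat by (apply natsum_ge; intros i Hi; specialize (Hm i ltac:(lia)); lia).
    simpl. lia.
Qed.
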